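(* Let $Y$ be a real normed space and let $X\subseteq Y$ be a non-empty compact set which is uniquely remotal with respect to $\mathrm{conv}(X)$. Then $X$ is a singleton.
   Context: A non-empty set $C$ in a normed space $S$ is said to be uniquely remotal with respect to a set $D\subseteq S$ if, for each $y\in D$, there exists a unique $x\in C$ such that $\|x-y\|=\sup_{u\in C}\|u-y\|$. Here $\mathrm{conv}(X)$ denotes the convex hull of $X$. *)

(* Defs.v *)
From HB Require Import structures.
From mathcomp Require Import all_boot all_order all_algebra.
From mathcomp Require Import all_classical all_reals all_analysis.
Set Implicit Arguments. Unset Strict Implicit. Unset Printing Implicit Defensive.
Import Order.TTheory GRing.Theory Num.Theory.
Import numFieldNormedType.Exports.
Local Open Scope classical_set_scope.
Local Open Scope ring_scope.

Definition conv_hull (R : realType) (Y : normedModType R) (X : set Y) : set Y :=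
  [set y | exists (n : nat) (l : 'I_n -> R) (x : 'I_n -> Y),
      (forall i, 0 <= l i) /\ \sum_(i < n) l i = 1 /\
      (forall i, X (x i)) /\ y = \sum_(i < n) l i *: x i].

Definition uniquely_remotal (R : realType) (Y : normedModType R) (C D : set Y) : Prop :=
  C !=set0 /\
  forall y, D y ->
    exists! x, C x /\ `|x - y| = sup [set `|u - y| | u in C].

(* Main.v *)
Require Import Defs.
From HB Require Import structures.
From mathcomp Require Import all_boot all_order all_algebra.
From mathcomp Require Import all_classical all_reals all_analysis.
From mathcomp Require Import lra finmap.
Import Order.TTheory GRing.Theory Num.Theory.
Import numFieldNormedType.Exports.
Local Open Scope classical_set_scope.
Local Open Scope ring_scope.

Definition rad {R : realType} {Y : normedModType R} (X : set Y) (y : Y) : R :=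
  sup [set `|u - y| | u in X].

Lemma bnd {R : realType} {Y : normedModType R} (X : set Y) :
  compact X -> exists M, forall u, X u -> `|u| <= M.
Proof.
move=> /compact_bounded [M [Mreal HM]].
by exists (`|M| + 1); apply: HM; rewrite (le_lt_trans (real_ler_norm Mreal)) // ltrDl.
Qed.

Lemma rad_ge {R : realType} {Y : normedModType R} (X : set Y) M y u :
  (forall u, X u -> `|u| <= M) -> X u -> `|u - y| <= rad X y.
Proof.
move=> HM Xu; apply: ub_le_sup; last by exists u.
exists (M + `|y|) => _ [w Xw <-].
by rewrite (le_trans (ler_normB _ _)) // lerD2r HM.
Qed.

Lemma rad_le {R : realType} {Y : normedModType R} (X : set Y) y B :
  X !=set0 -> (forall u, X u -> `|u - y| <= B) -> rad X y <= B.
Proof.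
move=> [a Xa] HB; apply: ge_sup; first by exists `|a - y|, a.
by move=> _ [w Xw <-]; exact: HB.
Qed.

Lemma rad_lip {R : realType} {Y : normedModType R} (X : set Y) M y z :
  X !=set0 -> (forall u, X u -> `|u| <= M) ->
  rad X y <= rad X z + `|y - z|.
Proof.
move=> X0 HM; apply: rad_le => // u Xu.
have -> : u - y = (u - z) + (z - y) by rewrite addrA subrK.
apply: (le_trans (ler_normD _ _)); apply: lerD; [exact: rad_ge HM Xu | by rewrite distrC].
Qed.

Lemma rad_cont {R : realType} {Y : normedModType R} (X : set Y) M :
  X !=set0 -> (forall u, X u -> `|u| <= M) -> continuous (rad X).
Proof.
move=> X0 HM x; apply/cvgrPdist_lt => e e0.
have := @cvgr_dist_lt _ _ _ (nbhs x) _ id x cvg_id _ e0.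
move=> H; near=> y; have hy : `|x - y| < e by near: y; exact: H.
have h1 := rad_lip _ _ y x X0 HM; have h2 := rad_lip _ _ x y X0 HM.
rewrite distrC in h1.
rewrite ltr_norml; apply/andP; split; lra.
Unshelve. all: by end_near.
Qed.

Definition simplex {R : realType} {n} : set 'rV[R]_n :=
  [set v | (forall i, 0 <= v ord0 i) /\ \sum_i v ord0 i = 1].

Lemma simplex_compact {R : realType} n : compact (@simplex R n).
Proof.
apply: (@subclosed_compact _ _ [set v : 'rV[R]_n | forall i, `[0, 1]%classic (v ord0 i)]).
- have -> : @simplex R n = (\bigcap_(i in setT) [set v : 'rV[R]_n | 0 <= v ord0 i])
     `&` ((fun v : 'rV[R]_n => \sum_i v ord0 i) @^-1` [set x | x = 1]).
    apply/seteqP; split => v /= [h1 h2]; split => //.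
      by move=> i _; exact: h1.
    by move=> i; exact: h1.
  apply: closedI.
    apply: closed_bigI => i _.
    apply: (@preimage_closed _ _ (fun v : 'rV[R]_n => v ord0 i) [set x | 0 <= x]).
      by move=> v _; exact: coord_continuous.
    exact: closed_ge.
  apply: (@preimage_closed _ _ (fun v : 'rV[R]_n => \sum_i v ord0 i) [set x | x = 1]); last exact: closed_eq.
  move=> v _; apply: (@continuous_big _ _ +%R 0 xpredT) => [|i _].
    exact: add_continuous.
  exact: coord_continuous.
- exact: (@rV_compact R n (fun=> `[0, 1]%classic) (fun=> @segment_compact R 0 1)).
- move=> v [h1 h2] i /=; rewrite in_itv /= h1 /= -h2.
  rewrite (bigD1 i) //= lerDl sumr_ge0 // => j _; exact: h1.
Qed.

Definition comb {R : realType} {Y : normedModType R} {n} (s : 'I_n -> Y)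
  (v : 'rV[R]_n) : Y := \sum_i v ord0 i *: s i.

Lemma comb_cont {R : realType} {Y : normedModType R} n (s : 'I_n -> Y) :
  continuous (comb s).
Proof.
move=> v; apply: (@continuous_big _ _ +%R 0 xpredT) => [|i _].
  exact: add_continuous.
move=> w; apply: continuousZr_tmp; exact: coord_continuous.
Qed.

Definition ev {R : realType} {n} (i : 'I_n) : 'rV[R]_n := \row_j (j == i)%:R.

Lemma ev_simplex {R : realType} n (i : 'I_n) : simplex (@ev R n i).
Proof.
split => [j|]; first by rewrite mxE ler0n.
rewrite (bigD1 i) //= big1 ?addr0; first by rewrite mxE eqxx.
by move=> j /negbTE ji; rewrite mxE ji.
Qed.

Lemma comb_ev {R : realType} {Y : normedModType R} n (s : 'I_n -> Y) i :
  comb s (ev i) = s i.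
Proof.
rewrite /comb (bigD1 i) //= big1 ?addr0; first by rewrite mxE eqxx scale1r.
by move=> j /negbTE ji; rewrite mxE ji scale0r.
Qed.

Lemma comb_lin {R : realType} {Y : normedModType R} n (s : 'I_n -> Y) a b v w :
  comb s (a *: v + b *: w) = a *: comb s v + b *: comb s w.
Proof.
rewrite /comb !scaler_sumr -big_split /=; apply: eq_bigr => i _.
by rewrite !mxE scalerDl !scalerA.
Qed.

Lemma simplex_mix {R : realType} n (v w : 'rV[R]_n) t :
  simplex v -> simplex w -> 0 <= t <= 1 -> simplex ((1 - t) *: v + t *: w).
Proof.
move=> [v0 v1] [w0 w1] /andP[t0 t1]; split => [j|].
  by rewrite !mxE addr_ge0 // mulr_ge0 // subr_ge0.
under eq_bigr do rewrite !mxE.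
by rewrite big_split /= -!mulr_sumr v1 w1 !mulr1 subrK.
Qed.

Lemma comb_conv {R : realType} {Y : normedModType R} (X : set Y) n (s : 'I_n -> Y) v :
  (forall i, X (s i)) -> simplex v -> conv_hull X (comb s v).
Proof.
move=> Xs [v0 v1]; exists n, (fun i => v ord0 i), s; split => //.
Qed.

Theorem theorem1p1 (R : realType) (Y : normedModType R) (X : set Y) :
  X !=set0 -> compact X -> uniquely_remotal X (conv_hull X) ->
  exists x : Y, X = [set x].
Proof.
move=> X0 cX [_ H].
have [M HM] := bnd _ cX.
apply: contrapT => Hne.
have [a Xa] := X0.
have [b Xb ba] : exists2 b, X b & b != a.
  apply: contrapT => nb; apply: Hne; exists a; apply/seteqP; split => u /=.
    move=> Xu; apply: contrapT => ua; apply: nb; exists u => //; exact/eqP.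
  by move=> ->.
set d := `|b - a|.
have d0 : 0 < d by rewrite normr_gt0 subr_eq0.
have radlow : forall y, d / 2 <= rad X y.
  move=> y; have h1 := rad_ge _ _ y _ HM Xb; have h2 := rad_ge _ _ y _ HM Xa.
  have : d <= `|b - y| + `|a - y|.
    rewrite /d; have -> : b - a = (b - y) - (a - y) by rewrite opprB addrA subrK.
    exact: ler_normB.
  lra.
have cc := cX; rewrite compact_cover in cc.
have d4 : 0 < d / 4 by lra.
have [D' sD cov] := cc _ X (fun x : Y => ball x (d / 4)) (fun _ _ => ball_open _ _)
  (fun u Xu => ex_intro2 X (fun i => ball i (d / 4) u) u Xu (ballxx u d4)).
set L : seq Y := finmap.enum_fset D'.
have memL : forall x, (x \in D') = (x \in L) by [].
set n := size L.
pose s (i : 'I_n) := nth 0 L i.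
have Xs : forall i, X (s i).
  by move=> i; apply/set_mem/sD; rewrite memL mem_nth.
have nearS : forall u, X u -> exists i, `|s i - u| < d / 4.
  move=> u Xu; have [z Dz bz] := cov u Xu.
  have zL : z \in L by rewrite -memL.
  exists (Ordinal (etrans (index_mem z L) zL)).
  by rewrite /s /= nth_index //; move: bz; rewrite -ball_normE.
have [i0 _] := nearS a Xa.
have [c cin cmin] := @compact_EVT_min _ _ (rad X \o comb s) (@simplex R n)
  (ex_intro _ (ev i0) (ev_simplex _ i0)) (simplex_compact n)
  (continuous_subspaceT (fun v => continuous_comp (comb_cont _ s v) (rad_cont X M X0 HM _))).
have cs : simplex c by exact: set_mem.
set y := comb s c.
have [x [[Xx xfar] xuniq]] := H y (comb_conv X _ s c Xs cs).
set rho := rad X y.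
have xrho : `|x - y| = rho by [].
have rho0 : d / 2 <= rho by exact: radlow.
have [i xi] := nearS x Xx.
set sx := s i.
have rhopos : 0 < rho by lra.
have xsx : `|x - sx| < rho / 2 by rewrite distrC; lra.
have contsx : continuous (fun u : Y => `|u - sx|).
  by move=> u; apply: cvg_norm; apply: cvgB; [exact: cvg_id | exact: cvg_cst].
set K := X `&` [set u | rho / 2 <= `|u - sx|].
have [rho' [rho'0 rho'lt Krho]] : exists r', [/\ 0 <= r', r' < rho &
    forall u, K u -> `|u - y| <= r'].
  case: (pselect (K !=set0)) => [K0|K0]; last first.
    exists 0; split => // u Ku; exfalso; apply: K0; by exists u.
  have cK : compact K.
    apply: compact_closedI => //.
    apply: (@preimage_closed _ _ (fun u : Y => `|u - sx|) [set z | rho / 2 <= z]).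
      by move=> u _; exact: contsx.
    exact: closed_ge.
  have cy : continuous (fun u : Y => `|u - y|).
    by move=> u; apply: cvg_norm; apply: cvgB; [exact: cvg_id | exact: cvg_cst].
  have [u0 u0K u0max] := compact_EVT_max K0 cK (continuous_subspaceT cy).
  have [Xu0 u0s] := set_mem u0K.
  exists `|u0 - y|; split => //.
  - rewrite lt_neqAle (rad_ge _ _ y _ HM Xu0) andbT.
    apply/eqP => equ; have xu := xuniq u0 (conj Xu0 equ).
    by move: u0s; rewrite -xu /=; lra.
  - by move=> u Ku; apply: u0max; exact: mem_set.
set B := rad X sx.
have B0 : 0 <= B by apply: le_trans (rad_ge _ _ sx _ HM Xa).
have HB : forall u, X u -> `|u - sx| <= B by move=> u Xu; exact: rad_ge _ _ sx _ HM Xu.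
set t := (rho - rho') / (2 * (B + rho)).
have hpos : 0 < 2 * (B + rho) by lra.
have tdef : t * (2 * (B + rho)) = rho - rho'.
  by rewrite /t mulfVK // gt_eqF.
have t0 : 0 < t by rewrite /t divr_gt0 //; lra.
have t1 : t <= 1 by rewrite /t ler_pdivrMr //; lra.
clearbody t.
set v' := (1 - t) *: c + t *: ev i.
have v's : simplex v'.
  by apply: simplex_mix => //; [exact: ev_simplex | apply/andP; split; lra].
have := cmin v' (mem_set v's); rewrite /= comb_lin comb_ev -/y -/sx -/rho => hmin.
have : rad X ((1 - t) *: y + t *: sx) <= Num.max ((1 - t) * rho' + t * B) (rho - t * rho / 2).
  apply: rad_le => // u Xu.
  have -> : u - ((1 - t) *: y + t *: sx) = (1 - t) *: (u - y) + t *: (u - sx).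
    by rewrite !scalerBr opprD addrACA -scalerDl subrK scale1r.
  have n1 : `|1 - t| = 1 - t by rewrite ger0_norm //; lra.
  have n2 : `|t| = t by rewrite gtr0_norm.
  apply: le_trans (ler_normD _ _) _; rewrite !normrZ n1 n2.
  case: (lerP (rho / 2) `|u - sx|) => hu.
    have := Krho u (conj Xu hu); have := HB u Xu => h1 h2.
    rewrite le_max; apply/orP; left; nra.
  have := rad_ge _ _ y _ HM Xu; rewrite -/rho => h1.
  rewrite le_max; apply/orP; right; nra.
move=> h; have := le_trans hmin h; rewrite le_max => /orP[] ?; nra.
Qed.
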